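(* Let $(M,\circ,\mathrm{OR})$ be a free $\mathbb{D}$-module of rank 3 with scalar product and orientation, and let $z_1,z_2,z_3\in M\setminus\epsilon M$. Then $z_1\times z_2\circ z_3=0$ if and only if either the three axes are parallel, or the three axes intersect orthogonally a common line of $E$.
   Context: $\mathbb{D}=\{a+\epsilon b: a,b\in\mathbb{R}\}$, $\epsilon^2=0$. Scalar product: symmetric $\mathbb{D}$-bilinear $\circ:M\times M\to\mathbb{D}$ with $\mathfrak{Re}(x\circ x)\ge0$, equality iff $x\in\epsilon M$; orientation: one of the two classes of ordered bases under $\{b'_j=A_{jk}b_k\}\sim\{b_k\}$ iff $\det\mathfrak{Re}(A)>0$. Cross product $x\times y=x^iy^j\epsilon_{ijk}m_k$ in any positive orthonormal basis $\{m_i\}$; $z_1\times z_2\circ z_3$ means $(z_1\times z_2)\circ z_3$. $V=M/\epsilon M$, $\pi$ the quotient map. $E$ is the set of real 3-dimensional subspaces $P\subset M$ with $\mathfrak{Du}(x\circ y)=0$ for $x,y\in P$ and $P\cap\epsilon M=\{0\}$, a Euclidean affine space over $V$ (with $B-A:=d^ke_k$ where $e^B_i=e^A_i+\epsilon\,\epsilon_{ijk}d^ke^A_j$, $\{e_i\}$ positive orthonormal in $V$, $e^P_i\in P$ its lift). Each $z\in M\setminus\epsilon M$ is uniquely $z=(a+\epsilon b)u$ with $a>0$, $b\in\mathbb{R}$, $u\circ u=1$; its axis is the line $\{P\in E: u\in P\}$, with direction $\pi(u)$. *)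

(* Defs.v *)
From HB Require Import structures.
From mathcomp Require Import all_boot all_order all_algebra.
From mathcomp Require Import ring.
From mathcomp Require Import reals.
Set Implicit Arguments. Unset Strict Implicit. Unset Printing Implicit Defensive.
Import Order.TTheory GRing.Theory Num.Theory.
Local Open Scope ring_scope.

Section DualRing.
Variable R : comNzRingType.

Record dual := Dual { dre : R; ddu : R }.

Definition dual_to (x : dual) : R * R := (dre x, ddu x).
Definition dual_of (p : R * R) : dual := Dual p.1 p.2.
Lemma dual_toK : cancel dual_to dual_of. Proof. by case. Qed.

HB.instance Definition _ := Equality.copy dual (can_type dual_toK).
HB.instance Definition _ := Choice.copy dual (can_type dual_toK).

Definition dadd x y := Dual (dre x + dre y) (ddu x + ddu y).
Definition dopp x := Dual (- dre x) (- ddu x).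
Definition dzero := Dual 0 0.
Definition dmul x y := Dual (dre x * dre y) (dre x * ddu y + ddu x * dre y).
Definition done := Dual 1 0.

Lemma daddA : associative dadd.
Proof. by case=> ? ?; case=> ? ?; case=> ? ?; rewrite /dadd /= !addrA. Qed.
Lemma daddC : commutative dadd.
Proof. by case=> ? ?; case=> ? ?; rewrite /dadd /= [X in Dual X _]addrC [X in Dual _ X]addrC. Qed.
Lemma dadd0 : left_id dzero dadd.
Proof. by case=> ? ?; rewrite /dadd /= !add0r. Qed.
Lemma daddN : left_inverse dzero dopp dadd.
Proof. by case=> ? ?; rewrite /dadd /= !addNr. Qed.

HB.instance Definition _ := GRing.isZmodule.Build dual daddA daddC dadd0 daddN.

Lemma dmulA : associative dmul.
Proof. by case=> ? ?; case=> ? ?; case=> ? ?; rewrite /dmul /=; congr Dual; ring. Qed.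
Lemma dmulC : commutative dmul.
Proof. by case=> ? ?; case=> ? ?; rewrite /dmul /=; congr Dual; ring. Qed.
Lemma dmul1 : left_id done dmul.
Proof. by case=> ? ?; rewrite /dmul /=; congr Dual; ring. Qed.
Lemma dmulD : left_distributive dmul dadd.
Proof. by case=> ? ?; case=> ? ?; case=> ? ?; rewrite /dmul /= /dadd /=; congr Dual; ring. Qed.
Lemma done_neq0 : done != 0.
Proof. by apply/negP=> /eqP [] /eqP; rewrite oner_eq0. Qed.

HB.instance Definition _ :=
  GRing.Zmodule_isComNzRing.Build dual dmulA dmulC dmul1 dmulD done_neq0.

End DualRing.

Arguments Dual {R}.

Section Geometry.
Variable R : realType.

Notation D := (dual R).
Definition M := 'rV[D]_3.
(* V = M / eps M, realised as R^3 via the quotient map pi (x + eps y |-> x). *)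
Definition V := 'rV[R]_3.

Definition eps : D := Dual 0 1.
Definition rD (r : R) : D := Dual r 0.

Definition epsM (x : M) : Prop := exists y : M, x = eps *: y.
Definition pi (x : M) : V := map_mx (@dre R) x.

Definition scalar_product (sp : M -> M -> D) : Prop :=
  [/\ forall x y, sp x y = sp y x,
      forall (a : D) x y z, sp (a *: x + y) z = a * sp x z + sp y z,
      forall x, 0 <= dre (sp x x)
    & forall x, dre (sp x x) = 0 <-> epsM x].

Definition is_basis (b : 'I_3 -> M) : Prop :=
  forall x : M, exists c : 'I_3 -> D,
    x = \sum_(i < 3) c i *: b i /\
    forall c' : 'I_3 -> D, x = \sum_(i < 3) c' i *: b i -> forall i, c' i = c i.

Definition same_orientation (b b' : 'I_3 -> M) : Prop :=
  exists A : 'M[D]_3,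
    (forall j, b' j = \sum_(k < 3) A j k *: b k) /\
    0 < \det (map_mx (@dre R) A).

(* orientation OR = class of the basis b0; m is a positive orthonormal basis *)
Definition pos_orthonormal (sp : M -> M -> D) (b0 m : 'I_3 -> M) : Prop :=
  [/\ is_basis m, same_orientation b0 m
    & forall i j, sp (m i) (m j) = if i == j then 1 else 0].

Definition levi (i j k : 'I_3) : D :=
  match nat_of_ord i, nat_of_ord j, nat_of_ord k with
  | 0%N, 1%N, 2%N | 1%N, 2%N, 0%N | 2%N, 0%N, 1%N => 1
  | 0%N, 2%N, 1%N | 2%N, 1%N, 0%N | 1%N, 0%N, 2%N => -1
  | _, _, _ => 0
  end.

(* cross product in the positive orthonormal basis m; the coordinates of
   x in the orthonormal basis m are x^i = x o m_i *)
Definition cross (sp : M -> M -> D) (m : 'I_3 -> M) (x y : M) : M :=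
  \sum_(i < 3) \sum_(j < 3) \sum_(k < 3)
     (sp x (m i) * sp y (m j) * levi i j k) *: m k.

Definition real3_subspace (P : M -> Prop) : Prop :=
  exists p : 'I_3 -> M,
    (forall r : 'I_3 -> R, \sum_(i < 3) rD (r i) *: p i = 0 -> forall i, r i = 0) /\
    (forall x, P x <-> exists r : 'I_3 -> R, x = \sum_(i < 3) rD (r i) *: p i).

Definition inE (sp : M -> M -> D) (P : M -> Prop) : Prop :=
  [/\ real3_subspace P,
      forall x y, P x -> P y -> ddu (sp x y) = 0
    & forall x, P x -> epsM x -> x = 0].

(* B - A = v in V, computed with the positive orthonormal basis
   e_i = pi (m_i) of V and the lifts e^P_i \in P of e_i:
   v = d^k e_k  and  e^B_i = e^A_i + eps eps_ijk d^k e^A_j *)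
Definition diffE (m : 'I_3 -> M) (A B : M -> Prop) (v : V) : Prop :=
  exists d : 'I_3 -> R,
    v = \sum_(k < 3) d k *: pi (m k) /\
    exists eA eB : 'I_3 -> M,
      (forall i, [/\ A (eA i), B (eB i), pi (eA i) = pi (m i) & pi (eB i) = pi (m i)]) /\
      (forall i, eB i = eA i + eps *: \sum_(j < 3) \sum_(k < 3)
                                        (rD (d k) * levi i j k) *: eA j).

Definition liftV (v : V) : M := map_mx rD v.
Definition vdot (sp : M -> M -> D) (v w : V) : R := dre (sp (liftV v) (liftV w)).

Definition line_dir (sp : M -> M -> D) (m : 'I_3 -> M)
    (L : (M -> Prop) -> Prop) (v : V) : Prop :=
  v != 0 /\ exists A, inE sp A /\ L A /\
    forall B, L B <-> (inE sp B /\ exists t : R, diffE m A B (t *: v)).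

Definition is_line sp m (L : (M -> Prop) -> Prop) : Prop :=
  exists v, line_dir sp m L v.

Definition axis (sp : M -> M -> D) (z : M) : (M -> Prop) -> Prop :=
  fun P => inE sp P /\
    exists (a b : R) (u : M), [/\ 0 < a, sp u u = 1, z = Dual a b *: u & P u].

Definition parallel3 sp m (L1 L2 L3 : (M -> Prop) -> Prop) : Prop :=
  exists v, [/\ line_dir sp m L1 v, line_dir sp m L2 v & line_dir sp m L3 v].

Definition meets_orthogonally sp m (L1 L : (M -> Prop) -> Prop) : Prop :=
  (exists P, L1 P /\ L P) /\
  exists v w, [/\ line_dir sp m L1 v, line_dir sp m L w & vdot sp v w = 0].

End Geometry.

(* Main.v *)
Require Import Defs.
From HB Require Import structures.
From mathcomp Require Import all_boot all_order all_algebra.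
From mathcomp Require Import reals.
From mathcomp Require Import ring lra.
From Stdlib Require Import Classical ClassicalEpsilon.
Set Implicit Arguments. Unset Strict Implicit. Unset Printing Implicit Defensive.
Import Order.TTheory GRing.Theory Num.Theory.
Local Open Scope ring_scope.

Module A.

Definition i0 : 'I_3 := @Ordinal 3 0 isT.
Definition i1 : 'I_3 := @Ordinal 3 1 isT.
Definition i2 : 'I_3 := @Ordinal 3 2 isT.
Lemma ord3P (i : 'I_3) : [\/ i = i0, i = i1 | i = i2].
Proof.
case: i => [[|[|[|n]]] Hi]; [constructor 1|constructor 2|constructor 3|by []];
 exact: val_inj.
Qed.
Lemma sum3 (V : nmodType) (F : 'I_3 -> V) : \sum_(i < 3) F i = F i0 + F i1 + F i2.
Proof.
rewrite !big_ord_recr big_ord0 /= add0r.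
by congr (_ + _ + _); congr F; apply: val_inj.
Qed.

Section Vec.
Variable R : realType.
Record v3 := V3 { c0 : R; c1 : R; c2 : R }.
Definition vadd a b := V3 (c0 a + c0 b) (c1 a + c1 b) (c2 a + c2 b).
Definition vsub a b := V3 (c0 a - c0 b) (c1 a - c1 b) (c2 a - c2 b).
Definition vsc (k : R) a := V3 (k * c0 a) (k * c1 a) (k * c2 a).
Definition dot a b := c0 a * c0 b + c1 a * c1 b + c2 a * c2 b.
Definition cross a b := V3 (c1 a * c2 b - c2 a * c1 b) (c2 a * c0 b - c0 a * c2 b)
                           (c0 a * c1 b - c1 a * c0 b).
Definition det a b c := dot a (cross b c).
Definition vzero := V3 0 0 0.
Definition Dd a1 a2 a3 b1 b2 b3 := det b1 a2 a3 + det a1 b2 a3 + det a1 a2 b3.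

Ltac vd := repeat match goal with v : v3 |- _ => destruct v end;
  rewrite /Dd /det /dot /cross /vadd /vsub /vsc /vzero /= .

Lemma v3E a b : c0 a = c0 b -> c1 a = c1 b -> c2 a = c2 b -> a = b.
Proof. by case: a b => ? ? ? [? ? ?] /= -> -> ->. Qed.

Lemma dot_eq0 a : dot a a = 0 -> a = vzero.
Proof. vd => h. apply: v3E => /=; nra. Qed.
Lemma dot_gt0 a : a <> vzero -> 0 < dot a a.
Proof.
move=> h. have: dot a a <> 0 by move/dot_eq0.
have: 0 <= dot a a by vd; nra.
move=> h1 h2. rewrite lt_neqAle h1 andbT. by apply/eqP=> e; apply: h2.
Qed.

Lemma cramer a b c y : vsc (det a b c) y =
  vadd (vadd (vsc (dot y a) (cross b c)) (vsc (dot y b) (cross c a)))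
       (vsc (dot y c) (cross a b)).
Proof. vd; apply: v3E => /=; ring. Qed.
Lemma cramer_dot a b c n : det a b c * dot n n =
  dot n a * dot (cross b c) n + dot n b * dot (cross c a) n + dot n c * dot (cross a b) n.
Proof. vd; ring. Qed.

Lemma perp_det0 a b c n : n <> vzero -> dot n a = 0 -> dot n b = 0 -> dot n c = 0 ->
  det a b c = 0.
Proof.
move=> hn ha hb hc. have := cramer_dot a b c n. rewrite ha hb hc !mul0r !addr0.
move/eqP; rewrite mulf_eq0 => /orP [/eqP //|/eqP h]. by have := dot_gt0 hn; rewrite h ltxx.
Qed.

Lemma zero_of_perp a b c y : det a b c <> 0 -> dot y a = 0 -> dot y b = 0 -> dot y c = 0 ->
  y = vzero.
Proof.
move=> hd ha hb hc. have := cramer a b c y. rewrite ha hb hc.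
move=> h. have : vsc (det a b c) y = vzero by rewrite h; vd; apply: v3E => /=; ring.
move: hd; vd => hd [] /eqP; rewrite mulf_eq0 (negbTE (introN eqP hd)) /= => /eqP ->
  /eqP; rewrite mulf_eq0 (negbTE (introN eqP hd)) /= => /eqP ->
  /eqP; rewrite mulf_eq0 (negbTE (introN eqP hd)) /= => /eqP -> //.
Qed.


Lemma dotC a b : dot a b = dot b a. Proof. vd; ring. Qed.

Lemma RL1 a1 a2 a3 b1 b2 b3 w k1 k2 k3 :
  a1 = vsc k1 w -> a2 = vsc k2 w -> a3 = vsc k3 w ->
  det a1 a2 a3 = 0 /\ Dd a1 a2 a3 b1 b2 b3 = 0.
Proof. move=> -> -> ->; split; vd; ring. Qed.

Lemma dot_n_cross n a : dot n (cross n a) = 0. Proof. vd; ring. Qed.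
Lemma dot_n_cross' n a : dot n (cross a n) = 0. Proof. vd; ring. Qed.

Lemma RL2 a1 a2 a3 b1 b2 b3 n x t1 t2 t3 : n <> vzero ->
  dot n a1 = 0 -> dot n a2 = 0 -> dot n a3 = 0 ->
  b1 = cross (vadd x (vsc t1 n)) a1 -> b2 = cross (vadd x (vsc t2 n)) a2 ->
  b3 = cross (vadd x (vsc t3 n)) a3 ->
  det a1 a2 a3 = 0 /\ Dd a1 a2 a3 b1 b2 b3 = 0.
Proof.
move=> hn h1 h2 h3 e1 e2 e3; split; first exact: perp_det0 hn h1 h2 h3.
have -> : Dd a1 a2 a3 b1 b2 b3 = t1 * det (cross n a1) a2 a3 +
   t2 * det a1 (cross n a2) a3 + t3 * det a1 a2 (cross n a3).
  by rewrite e1 e2 e3; vd; ring.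
rewrite (perp_det0 hn (dot_n_cross n a1) h2 h3) (perp_det0 hn h1 (dot_n_cross n a2) h3).
rewrite (perp_det0 hn h1 h2 (dot_n_cross n a3)). ring.
Qed.

Lemma vsubK x b : vsub x b = vzero -> x = b.
Proof. vd => -[] /eqP; rewrite subr_eq0 => /eqP -> /eqP; rewrite subr_eq0 => /eqP ->
  /eqP; rewrite subr_eq0 => /eqP -> //. Qed.

Lemma meet_lemma a b n q : dot a a = 1 -> n <> vzero -> dot a n = 0 -> dot a b = 0 ->
  dot (cross q a) n = dot b n -> exists t, cross (vadd q (vsc t n)) a = b.
Proof.
move=> ha hn han hab hq.
have hN := dot_gt0 hn.
have hden : dot (cross n a) (cross a n) = - dot n n.
  have -> : dot (cross n a) (cross a n) = - (dot a a * dot n n - dot a n ^+ 2) by vd; ring.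
  by rewrite ha han; ring.
set t := (dot b (cross a n) - dot (cross q a) (cross a n)) / dot (cross n a) (cross a n).
exists t; apply: vsubK.
have ed : forall X, dot (vsub (cross (vadd q (vsc t n)) a) b) X =
   dot (cross q a) X + t * dot (cross n a) X - dot b X by move=> X; vd; ring.
apply: (zero_of_perp (a := a) (b := n) (c := cross a n)).
- have -> : det a n (cross a n) = dot a a * dot n n - dot a n ^+ 2 by vd; ring.
  rewrite ha han; move=> h; move: hN.
  have -> : dot n n = 0 by rewrite -h; ring.
  by rewrite ltxx.
- rewrite ed (dotC b a) hab.
  have -> : dot (cross q a) a = 0 by vd; ring.
  have -> : dot (cross n a) a = 0 by vd; ring.
  ring.
- rewrite ed hq. have -> : dot (cross n a) n = 0 by vd; ring. ring.
- rewrite ed /t hden. have hN0 : dot n n != 0 by rewrite gt_eqF.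
  field. exact: hN0.
Qed.

Lemma decompb a b n : dot a a = 1 -> dot a n = 0 -> dot a b = 0 ->
  vsc (dot n n) b = vadd (vsc (dot b n) n) (vsc (dot b (cross a n)) (cross a n)).
Proof.
move=> ha han hab.
have e1 : det a n (cross a n) = dot n n.
  have -> : det a n (cross a n) = dot a a * dot n n - dot a n ^+ 2 by vd; ring.
  by rewrite ha han; ring.
have e2 : cross (cross a n) a = n.
  have -> : cross (cross a n) a = vsub (vsc (dot a a) n) (vsc (dot a n) a)
    by vd; apply: v3E => /=; ring.
  by rewrite ha han; vd; apply: v3E => /=; ring.
have := cramer a n (cross a n) b. rewrite e1 e2 (dotC b a) hab => ->.
vd; apply: v3E => /=; ring.
Qed.

Lemma core a1 a2 a3 b1 b2 b3 :
  dot a1 a1 = 1 -> dot a2 a2 = 1 -> dot a3 a3 = 1 ->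
  dot a1 b1 = 0 -> dot a2 b2 = 0 -> dot a3 b3 = 0 ->
  det a1 a2 a3 = 0 -> Dd a1 a2 a3 b1 b2 b3 = 0 -> cross a1 a2 <> vzero ->
  exists q n, n <> vzero /\
   [/\ dot a1 n = 0 /\ exists t, cross (vadd q (vsc t n)) a1 = b1,
       dot a2 n = 0 /\ exists t, cross (vadd q (vsc t n)) a2 = b2 &
       dot a3 n = 0 /\ exists t, cross (vadd q (vsc t n)) a3 = b3].
Proof.
move=> u1 u2 u3 o1 o2 o3 hdet hD hn.
set n := cross a1 a2.
have hN := dot_gt0 hn. have hN0 : dot n n != 0 by rewrite gt_eqF.
have h1 : dot a1 n = 0 by rewrite /n; vd; ring.
have h2 : dot a2 n = 0 by rewrite /n; vd; ring.
have h3 : dot a3 n = 0 by rewrite -hdet /n; vd; ring.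
set s1 := dot b1 n; set s2 := dot b2 n; set s3 := dot b3 n.
set X := vsub (vsc s1 (cross a2 n)) (vsc s2 (cross a1 n)).
set r := vsc (dot n n)^-1 X.
set q := vsc (dot n n)^-1 (cross r n).
have key : forall a, dot a n = 0 -> dot (cross q a) n = dot a r.
  move=> a han.
  have -> : dot (cross q a) n = (dot n n)^-1 * (dot r a * dot n n - dot r n * dot n a)
    by rewrite /q; vd; ring.
  rewrite (dotC n a) han (dotC r a). field. exact: hN0.
have ra : forall a, dot a r = (dot n n)^-1 * dot a X by move=> a; rewrite /r; vd; ring.
have r1 : dot a1 r = s1.
  rewrite ra. have -> : dot a1 X = s1 * dot n n by rewrite /X /n; vd; ring.
  field; exact: hN0.
have r2 : dot a2 r = s2.
  rewrite ra. have -> : dot a2 X = s2 * dot n n by rewrite /X /n; vd; ring.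
  field; exact: hN0.
have r3 : dot a3 r = s3.
  have d1 := decompb u1 h1 o1. have d2 := decompb u2 h2 o2. have d3 := decompb u3 h3 o3.
  have eN : dot n n * Dd a1 a2 a3 b1 b2 b3 =
     Dd a1 a2 a3 (vsc (dot n n) b1) (vsc (dot n n) b2) (vsc (dot n n) b3) by vd; ring.
  rewrite d1 d2 d3 hD mulr0 in eN.
  have eE : forall (x1 y1 x2 y2 x3 y3 : R),
    Dd a1 a2 a3 (vadd (vsc x1 n) (vsc y1 (cross a1 n))) (vadd (vsc x2 n) (vsc y2 (cross a2 n)))
      (vadd (vsc x3 n) (vsc y3 (cross a3 n))) =
    x1 * det n a2 a3 + y1 * det (cross a1 n) a2 a3 + x2 * det a1 n a3
    + y2 * det a1 (cross a2 n) a3 + x3 * det a1 a2 n + y3 * det a1 a2 (cross a3 n).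
    by move=> *; vd; ring.
  rewrite eE in eN.
  have hn1 : dot n a1 = 0 by rewrite dotC.
  have hn2 : dot n a2 = 0 by rewrite dotC.
  have hn3 : dot n a3 = 0 by rewrite dotC.
  rewrite (perp_det0 hn (dot_n_cross' n a1) hn2 hn3) in eN.
  rewrite (perp_det0 hn hn1 (dot_n_cross' n a2) hn3) in eN.
  rewrite (perp_det0 hn hn1 hn2 (dot_n_cross' n a3)) in eN.
  have e4 : det a1 a2 n = dot n n by rewrite /n; vd; ring.
  rewrite e4 in eN.
  rewrite ra. have -> : dot a3 X = - (s1 * det n a2 a3 + s2 * det a1 n a3)
    by rewrite /X; vd; ring.
  have -> : s1 * det n a2 a3 + s2 * det a1 n a3 = - (s3 * dot n n).
    have eN' : 0 = (s1 * det n a2 a3 + s2 * det a1 n a3) + s3 * dot n n.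
    by rewrite [LHS]eN /s1 /s2 /s3; ring.
    by move/eqP: eN'; rewrite eq_sym addr_eq0 => /eqP.
  field; exact: hN0.
exists q, n; split => //; split; (split; [done|apply: meet_lemma => //]).
- by rewrite key.
- by rewrite key.
- by rewrite key.
Qed.

Lemma cross_zero_par w a : dot a a = 1 -> cross w a = vzero -> w = vsc (dot w a) a.
Proof.
move=> ha hw.
have e : vsc (dot a a) w = vadd (vsc (dot w a) a) (cross a (cross w a))
  by vd; apply: v3E => /=; ring.
move: e; rewrite ha hw => e.
apply: etrans (_ : w = vsc 1 w) _; first by vd; apply: v3E => /=; ring.
by rewrite e; clear; vd; apply: v3E => /=; ring.
Qed.

Lemma unit_neq0 a : dot a a = 1 -> a <> vzero.
Proof. by move=> h e; move: h; rewrite e /dot /vzero /=; move/eqP; rewrite !mul0r !addr0 eq_sym oner_eq0. Qed.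

Lemma vsc_neq0 c a : c != 0 -> a <> vzero -> vsc c a <> vzero.
Proof.
move=> hc ha e; apply: ha; move: e; rewrite /vsc /vzero => -[].
move=> /eqP; rewrite mulf_eq0 (negbTE hc) /= => /eqP h0.
move=> /eqP; rewrite mulf_eq0 (negbTE hc) /= => /eqP h1.
move=> /eqP; rewrite mulf_eq0 (negbTE hc) /= => /eqP h2.
by apply: v3E; rewrite ?h0 ?h1 ?h2.
Qed.

Lemma vsub_eq q p t w : vsub q p = vsc t w <-> q = vadd p (vsc t w).
Proof. by split => h; [rewrite -h | rewrite h]; vd; apply: v3E => /=; ring. Qed.

Lemma axis_real al be P c : dot al al = 1 -> dot al be = 0 -> c != 0 ->
  (be = cross P al <-> exists t, P = vadd (cross al be) (vsc t (vsc c al))).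
Proof.
move=> ha hab hc; split.
- move=> hb.
  pose w := vsub P (cross al be).
  have hw : cross w al = vzero.
    have -> : cross w al = vsub (cross P al) (vsub (vsc (dot al al) be) (vsc (dot al be) al))
      by rewrite /w; vd; apply: v3E => /=; ring.
    by rewrite -hb ha hab; vd; apply: v3E => /=; ring.
  have e := cross_zero_par ha hw.
  exists (dot w al / c).
  have -> : P = vadd (cross al be) w by rewrite /w; vd; apply: v3E => /=; ring.
  rewrite {1}e; vd; apply: v3E => /=; field; exact: hc.
- case=> t ->.
  have -> : cross (vadd (cross al be) (vsc t (vsc c al))) al =
    vsub (vsc (dot al al) be) (vsc (dot al be) al) by vd; apply: v3E => /=; ring.
  by rewrite ha hab; vd; apply: v3E => /=; ring.
Qed.

Lemma core_any a1 a2 a3 b1 b2 b3 :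
  dot a1 a1 = 1 -> dot a2 a2 = 1 -> dot a3 a3 = 1 ->
  dot a1 b1 = 0 -> dot a2 b2 = 0 -> dot a3 b3 = 0 ->
  det a1 a2 a3 = 0 -> Dd a1 a2 a3 b1 b2 b3 = 0 ->
  ~ (cross a1 a2 = vzero /\ cross a1 a3 = vzero /\ cross a2 a3 = vzero) ->
  exists q n, n <> vzero /\
   [/\ dot a1 n = 0 /\ exists t, cross (vadd q (vsc t n)) a1 = b1,
       dot a2 n = 0 /\ exists t, cross (vadd q (vsc t n)) a2 = b2 &
       dot a3 n = 0 /\ exists t, cross (vadd q (vsc t n)) a3 = b3].
Proof.
move=> u1 u2 u3 o1 o2 o3 hd hD hn.
case: (classic (cross a1 a2 = vzero)) => h12; last exact: core.
case: (classic (cross a1 a3 = vzero)) => h13.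
  have h23 : cross a2 a3 <> vzero by move=> h; apply: hn.
  have hd' : det a2 a3 a1 = 0 by rewrite -hd; vd; ring.
  have hD' : Dd a2 a3 a1 b2 b3 b1 = 0 by rewrite -hD; vd; ring.
  have [q [n [hn0 [c1 c2 c3]]]] := core u2 u3 u1 o2 o3 o1 hd' hD' h23.
  by exists q, n.
have hd' : det a1 a3 a2 = 0 by move: hd; vd => hd; rewrite -oppr0 -hd; ring.
have hD' : Dd a1 a3 a2 b1 b3 b2 = 0 by move: hD; vd => hD; rewrite -oppr0 -hD; ring.
have [q [n [hn0 [c1 c2 c3]]]] := core u1 u3 u2 o1 o3 o2 hd' hD' h13.
by exists q, n.
Qed.

Lemma par_all a1 a2 a3 : dot a1 a1 = 1 -> dot a2 a2 = 1 -> dot a3 a3 = 1 ->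
  cross a1 a2 = vzero -> cross a1 a3 = vzero ->
  exists c2 c3, [/\ c2 != 0, c3 != 0, a1 = vsc c2 a2 & a1 = vsc c3 a3].
Proof.
move=> u1 u2 u3 h12 h13.
have e2 := cross_zero_par u2 h12. have e3 := cross_zero_par u3 h13.
exists (dot a1 a2), (dot a1 a3); split => //.
- by apply/eqP => h; apply: (unit_neq0 u1); rewrite e2 h; vd; apply: v3E => /=; ring.
- by apply/eqP => h; apply: (unit_neq0 u1); rewrite e3 h; vd; apply: v3E => /=; ring.
Qed.

Lemma dir_lemma al be p0 w : dot al al = 1 -> be = cross (vadd p0 (vsc 0 w)) al ->
  be = cross (vadd p0 (vsc 1 w)) al -> w <> vzero -> exists c, c != 0 /\ w = vsc c al.
Proof.
move=> ha h0 h1 hw.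
have hcw : cross w al = vzero.
  have -> : cross w al = vsub (cross (vadd p0 (vsc 1 w)) al) (cross (vadd p0 (vsc 0 w)) al)
    by vd; apply: v3E => /=; ring.
  by rewrite -h0 -h1; clear; vd; apply: v3E => /=; ring.
have e := cross_zero_par ha hcw.
exists (dot w al); split => //; apply/eqP => c0; apply: hw; rewrite e c0.
by clear; vd; apply: v3E => /=; ring.
Qed.

Lemma vsc1 a : vsc 1 a = a. Proof. by vd; apply: v3E => /=; ring. Qed.
Lemma vsc_inv c a : c != 0 -> a = vsc c^-1 (vsc c a).
Proof. by move=> hc; vd; apply: v3E => /=; field. Qed.
Lemma dot_vscl c a b : dot (vsc c a) b = c * dot a b. Proof. by vd; ring. Qed.
Lemma dot_vscr c a b : dot a (vsc c b) = c * dot a b. Proof. by vd; ring. Qed.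
Lemma vadd0 x n : vadd x (vsc 0 n) = x. Proof. by vd; apply: v3E => /=; ring. Qed.

End Vec.

End A.

Module B.
Import A.

Section Geo.
Variable R : realType.
Local Notation D := (dual R).
Local Notation M := (M R).
Local Notation V := (V R).
Local Notation piM := (@Defs.pi R).
Local Notation rD := (@Defs.rD R).
Variable sp : M -> M -> D.
Variable m : 'I_3 -> M.
Hypothesis hsp : scalar_product sp.
Hypothesis hmb : is_basis m.
Hypothesis hmo : forall i j, sp (m i) (m j) = if i == j then 1 else 0.

Lemma dual_eq (x y : D) : dre x = dre y -> ddu x = ddu y -> x = y.
Proof. by case: x y => ? ? [? ?] /= -> ->. Qed.
Lemma dual_split (x : D) : x = Dual (dre x) (ddu x). Proof. by case: x. Qed.

Lemma sp_sym x y : sp x y = sp y x. Proof. by case: hsp. Qed.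
Lemma sp_lin a x y z : sp (a *: x + y) z = a * sp x z + sp y z. Proof. by case: hsp. Qed.
Lemma sp0 z : sp 0 z = 0.
Proof.
have := sp_lin 1 0 0 z; rewrite scaler0 addr0 mul1r => h.
by apply: (@addrI _ (sp 0 z)); rewrite addr0 -h.
Qed.
Lemma spD x y z : sp (x + y) z = sp x z + sp y z.
Proof. by have := sp_lin 1 x y z; rewrite scale1r mul1r. Qed.
Lemma spZ a x z : sp (a *: x) z = a * sp x z.
Proof. by have := sp_lin a x 0 z; rewrite !addr0 sp0 addr0. Qed.

Definition co (x : M) (i : 'I_3) : D := sp x (m i).
Local Notation rc x i := (dre (co x i)).
Local Notation dc x i := (ddu (co x i)).

Lemma coD x y i : co (x + y) i = co x i + co y i. Proof. exact: spD. Qed.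
Lemma coZ a x i : co (a *: x) i = a * co x i. Proof. exact: spZ. Qed.
Lemma co0 i : co 0 i = 0. Proof. exact: sp0. Qed.
Lemma coN x i : co (- x) i = - co x i.
Proof. by rewrite -scaleN1r coZ mulN1r. Qed.
Lemma coB x y i : co (x - y) i = co x i - co y i. Proof. by rewrite coD coN. Qed.
Lemma co_m i j : co (m i) j = if i == j then 1 else 0. Proof. exact: hmo. Qed.
Lemma co_sum (F : 'I_3 -> M) k : co (\sum_(i < 3) F i) k = \sum_(i < 3) co (F i) k.
Proof. by rewrite !sum3 !coD. Qed.

Ltac ord3 i := case: (ord3P i) => ->.

Lemma co_sum_m (c : 'I_3 -> D) j : co (\sum_(i < 3) c i *: m i) j = c j.
Proof.
rewrite co_sum sum3 !coZ !co_m.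
by ord3 j => /=; rewrite ?mulr1 ?mulr0 ?addr0 ?add0r.
Qed.

Lemma co_comb (c : 'I_3 -> D) (p : 'I_3 -> M) j : co (\sum_(i < 3) c i *: p i) j =
  c i0 * co (p i0) j + c i1 * co (p i1) j + c i2 * co (p i2) j.
Proof. by rewrite co_sum sum3 !coZ. Qed.

Lemma co_expand x : x = \sum_(i < 3) co x i *: m i.
Proof.
have [c [e _]] := hmb x.
have hc : forall i, co x i = c i by move=> i; rewrite e co_sum_m.
by rewrite {1}e; apply: eq_bigr => i _; rewrite hc.
Qed.
Lemma co_inj x y : (forall i, co x i = co y i) -> x = y.
Proof.
move=> h; rewrite (co_expand x) (co_expand y).
by apply: eq_bigr => i _; rewrite h.
Qed.

Lemma sp_co x y : sp x y = co x i0 * co y i0 + co x i1 * co y i1 + co x i2 * co y i2.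
Proof.
rewrite {1}(co_expand x) !sum3 !spD !spZ.
by rewrite !(sp_sym (m _) y).
Qed.

Lemma rDD a b : rD (a + b) = rD a + rD b. Proof. by apply: dual_eq => //=; rewrite addr0. Qed.
Lemma rDM a b : rD (a * b) = rD a * rD b. Proof. by apply: dual_eq => //=; ring. Qed.
Lemma rDN a : rD (- a) = - rD a. Proof. by apply: dual_eq => //=; rewrite oppr0. Qed.
Lemma rD1 : rD 1 = 1. Proof. by []. Qed.
Lemma rD0 : rD 0 = 0. Proof. by []. Qed.

Lemma epsM_rc x : epsM x <-> forall i, rc x i = 0.
Proof.
split.
  by case=> y -> i; rewrite coZ /= mul0r.
move=> h; exists (\sum_(i < 3) Dual (dc x i) 0 *: m i).
apply: co_inj => i; rewrite coZ co_sum_m.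
by apply: dual_eq => /=; rewrite ?h; ring.
Qed.

Lemma epsM_pi x : epsM x <-> piM x = 0.
Proof.
split.
  by case=> y ->; apply/matrixP => a b; rewrite !mxE /= mul0r.
move=> h; exists (map_mx (fun d => Dual (ddu d) 0) x).
apply/matrixP => a b; rewrite !mxE.
have h' : dre (x a b) = 0 by move/matrixP: h => /(_ a b); rewrite !mxE.
by apply: dual_eq => /=; [rewrite mul0r; exact: h' | ring].
Qed.

Lemma piB x y : piM (x - y) = piM x - piM y.
Proof. by apply/matrixP => a b; rewrite !mxE. Qed.
Lemma piD x y : piM (x + y) = piM x + piM y.
Proof. by apply/matrixP => a b; rewrite !mxE. Qed.
Lemma piZ r x : piM (rD r *: x) = r *: piM x.
Proof. by apply/matrixP => a b; rewrite !mxE /=. Qed.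

Lemma pi_rc x y : piM x = piM y <-> forall i, rc x i = rc y i.
Proof.
split.
  move=> h; have : epsM (x - y) by apply/epsM_pi; rewrite piB h subrr.
  move/epsM_rc => h' i; have := h' i; rewrite coB /= => /eqP; rewrite subr_eq0 => /eqP //.
move=> h; apply/eqP; rewrite -subr_eq0 -piB; apply/eqP/epsM_pi/epsM_rc => i.
by rewrite coB /= h subrr.
Qed.

Definition vc (v : V) (i : 'I_3) : R := rc (liftV v) i.
Lemma pi_liftV v : piM (liftV v) = v.
Proof. by apply/matrixP => a b; rewrite !mxE. Qed.
Lemma vc_pi x i : vc (piM x) i = rc x i.
Proof. by move: i; apply/pi_rc; rewrite pi_liftV. Qed.
Lemma pi_comb (d : 'I_3 -> R) :
  piM (\sum_(k < 3) rD (d k) *: m k) = \sum_(k < 3) d k *: piM (m k).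
Proof. by rewrite !sum3 !piD !piZ. Qed.
Lemma rc_comb_m (d : 'I_3 -> R) i : rc (\sum_(k < 3) rD (d k) *: m k) i = d i.
Proof. by rewrite co_sum_m. Qed.
Lemma vc_comb (d : 'I_3 -> R) i : vc (\sum_(k < 3) d k *: piM (m k)) i = d i.
Proof. by rewrite -pi_comb vc_pi rc_comb_m. Qed.
Lemma vc_expand v : v = \sum_(k < 3) vc v k *: piM (m k).
Proof.
rewrite -pi_comb -{1}(pi_liftV v); apply/pi_rc => i.
by rewrite rc_comb_m.
Qed.
Lemma vc_inj v w : (forall i, vc v i = vc w i) -> v = w.
Proof.
move=> h; rewrite (vc_expand v) (vc_expand w).
by apply: eq_bigr => i _; rewrite h.
Qed.
Lemma vc0 i : vc 0 i = 0.
Proof.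
have -> : (0 : V) = piM 0 by apply/matrixP => a b; rewrite !mxE.
by rewrite vc_pi co0.
Qed.
Lemma vcZ t v i : vc (t *: v) i = t * vc v i.
Proof.
rewrite /vc.
have -> : liftV (t *: v) = rD t *: liftV v.
  by apply/matrixP => a b; rewrite !mxE; apply: dual_eq => /=; ring.
by rewrite coZ /=.
Qed.

Definition tov (f : 'I_3 -> R) : v3 R := V3 (f i0) (f i1) (f i2).
Definition vcv (v : V) := tov (vc v).
Definition mkV (w : v3 R) : V := \sum_(k < 3) (match nat_of_ord k with 0 => c0 w | 1 => c1 w | _ => c2 w end) *: piM (m k).
Lemma vcv_mkV w : vcv (mkV w) = w.
Proof. by rewrite /vcv /tov /mkV !vc_comb /=; case: w. Qed.
Lemma vcvZ t v : vcv (t *: v) = vsc t (vcv v).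
Proof. by rewrite /vcv /tov !vcZ. Qed.
Lemma vcv_neq0 v : (v != 0) <-> vcv v <> vzero R.
Proof.
split.
  move=> /eqP h e; apply: h; apply: vc_inj => i; rewrite vc0.
  by move: e; rewrite /vcv /tov /vzero => -[]; ord3 i.
move=> h; apply/eqP => e; apply: h; rewrite e /vcv /tov /vzero !vc0 //.
Qed.

Lemma vdot_vc v w : vdot sp v w = dot (vcv v) (vcv w).
Proof. by rewrite /vdot sp_co. Qed.

End Geo.

End B.

Module C.
Import A B.

Section Pts.
Variable R : realType.
Local Notation D := (dual R).
Local Notation M := (M R).
Local Notation V := (V R).
Local Notation piM := (@Defs.pi R).
Local Notation rD := (@Defs.rD R).
Variable sp : M -> M -> D.
Variable m : 'I_3 -> M.
Hypothesis hsp : scalar_product sp.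
Hypothesis hmb : is_basis m.
Hypothesis hmo : forall i j, sp (m i) (m j) = if i == j then 1 else 0.
Local Notation co := (co sp m).
Local Notation rc x i := (dre (co x i)).
Local Notation dc x i := (ddu (co x i)).
Local Notation coD := (coD m hsp).
Local Notation coZ := (coZ m hsp).
Local Notation co_inj := (co_inj hsp hmb hmo).

Ltac ord3 i := case: (ord3P i) => ->.
Ltac coring := apply: co_inj => ?; rewrite ?sum3 ?(coD, coZ, rDD, rDM, rDN); ring.

Definition delta (i j : 'I_3) : R := if i == j then 1 else 0.
Definition Cp (p : v3 R) (i j : 'I_3) : R :=
  match nat_of_ord i, nat_of_ord j with
  | 1%N, 2%N => c0 p | 2%N, 1%N => - c0 p
  | 2%N, 0%N => c1 p | 0%N, 2%N => - c1 p
  | 0%N, 1%N => c2 p | 1%N, 0%N => - c2 p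
  | _, _ => 0 end.


Definition lift_of (P : M -> Prop) (p : v3 R) (e : 'I_3 -> M) :=
  forall i, P (e i) /\ forall j, co (e i) j = Dual (delta i j) (Cp p i j).
Definition ptpos (P : M -> Prop) (p : v3 R) := Defs.inE sp P /\ exists e, lift_of P p e.


Section Span.
Variable P : M -> Prop.
Hypothesis hP : Defs.inE sp P.

Lemma span_of : exists p : 'I_3 -> M,
  (forall r : 'I_3 -> R, \sum_(i < 3) rD (r i) *: p i = 0 -> forall i, r i = 0) /\
  (forall x, P x <-> exists r : 'I_3 -> R, x = \sum_(i < 3) rD (r i) *: p i).
Proof. by case: hP => -[p hp] _ _; exists p. Qed.

Lemma P_add x y : P x -> P y -> P (x + y).
Proof.
have [p [_ hs]] := span_of.
move=> /hs [r ->] /hs [s ->]; apply/hs; exists (fun i => r i + s i).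
by rewrite -big_split /=; apply: eq_bigr => i _; rewrite rDD scalerDl.
Qed.
Lemma P_scale t x : P x -> P (rD t *: x).
Proof.
have [p [_ hs]] := span_of.
move=> /hs [r ->]; apply/hs; exists (fun i => t * r i).
by rewrite scaler_sumr; apply: eq_bigr => i _; rewrite scalerA rDM.
Qed.
Lemma P_sub x y : P x -> P y -> P (x - y).
Proof.
move=> hx hy; have -> : x - y = x + rD (-1) *: y by rewrite rDN rD1 scaleN1r.
by apply: P_add => //; apply: P_scale.
Qed.
Lemma P_comb (r : 'I_3 -> R) (e : 'I_3 -> M) : (forall i, P (e i)) ->
  P (\sum_(i < 3) rD (r i) *: e i).
Proof.
have [p [_ hs]] := span_of.
move=> he; apply: (big_ind P) => //; last by move=> i _; apply: P_scale.
  apply/hs; exists (fun _ => 0); rewrite big1 // => i _; by rewrite rD0 scale0r.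
exact: P_add.
Qed.

Lemma lift_unique x y : P x -> P y -> (forall j, rc x j = rc y j) -> x = y.
Proof.
move=> hx hy h; case: hP => _ _ ht.
have : x - y = 0.
  apply: ht; first exact: P_sub.
  by apply/(epsM_rc hsp hmb hmo) => j; rewrite (coB m hsp x y j) /= h subrr.
by move/eqP; rewrite subr_eq0 => /eqP.
Qed.

Lemma lifts (w : 'I_3 -> R) : exists x, P x /\ forall j, rc x j = w j.
Proof.
have [p [hind hs]] := span_of.
case: hP => _ _ htriv.
pose comb (r : 'I_3 -> R) := \sum_(i < 3) rD (r i) *: p i.
have Pc : forall r, P (comb r) by move=> r; apply/hs; exists r.
have rcc : forall r j, rc (comb r) j = \sum_(i < 3) r i * rc (p i) j.
  by move=> r j; rewrite /comb (co_comb m hsp) sum3.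
pose Q := \matrix_(i < 3, j < 3) rc (p i) j.
have hQ : \det Q != 0.
  apply/negP => /det0P [v hv0 hvQ].
  have : comb (fun i => v ord0 i) = 0.
    apply: htriv; first exact: Pc.
    apply/(epsM_rc hsp hmb hmo) => j; rewrite rcc.
    move/matrixP: hvQ => /(_ ord0 j); rewrite !mxE => h; apply: (etrans _ h).
    by apply: eq_bigr => i _; rewrite ?mxE.
  move/hind => h0; apply: (negP hv0); apply/eqP/matrixP => a b.
  by rewrite ord1 !mxE h0.
pose s := (\row_j w j) *m invmx Q.
exists (comb (fun i => s ord0 i)); split; first exact: Pc.
move=> j; rewrite rcc.
have : s *m Q = \row_j w j.
  by rewrite /s -mulmxA mulVmx ?mulmx1 // unitmxE unitfE.
move/matrixP => /(_ ord0 j); rewrite !mxE => h; apply: (etrans _ h).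
by apply: eq_bigr => i _; rewrite ?mxE.
Qed.

End Span.

Lemma comb_co P p e (r : 'I_3 -> R) j : lift_of P p e ->
  co (\sum_(i < 3) rD (r i) *: e i) j =
  Dual (r j) (r i0 * Cp p i0 j + r i1 * Cp p i1 j + r i2 * Cp p i2 j).
Proof.
move=> he; rewrite (co_comb m hsp) !(he _).2.
apply: dual_eq => /=; last by ring.
by ord3 j; rewrite /delta /=; ring.
Qed.

Lemma rc_lift P p e i j : lift_of P p e -> rc (e i) j = delta i j.
Proof. by move=> he; rewrite (he i).2. Qed.

Lemma lift_eq P p e x i : Defs.inE sp P -> lift_of P p e -> P x ->
  (forall j, rc x j = delta i j) -> x = e i.
Proof.
move=> hP he hx h; apply: (lift_unique hP hx (he i).1) => j.
by rewrite h (rc_lift i j he).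
Qed.

Lemma comb_lift P p e x : Defs.inE sp P -> lift_of P p e -> P x ->
  x = \sum_(i < 3) rD (rc x i) *: e i.
Proof.
move=> hP he hx; apply: (lift_unique hP hx).
  by apply: P_comb => // i; exact: (he i).1.
move=> j; rewrite (comb_co _ _ he) /=; done.
Qed.

Lemma mem_crit P p e u : Defs.inE sp P -> lift_of P p e ->
  (P u <-> tov (fun j => dc u j) = cross p (tov (fun j => rc u j))).
Proof.
move=> hP he; split.
  move=> hu; have eu := comb_lift hP he hu.
  have h : forall j, dc u j = rc u i0 * Cp p i0 j + rc u i1 * Cp p i1 j + rc u i2 * Cp p i2 j.
    by move=> j; rewrite {1}eu (comb_co _ _ he).
  by rewrite /tov /cross /= !h /Cp /=; congr V3; ring.
move=> hc.
have -> : u = \sum_(i < 3) rD (rc u i) *: e i.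
  apply: co_inj => j; rewrite (comb_co _ _ he); rewrite [LHS]dual_split; congr Dual.
  move: hc; rewrite /tov /cross /= => -[h0 h1 h2].
  by ord3 j; rewrite /Cp /= ?h0 ?h1 ?h2; ring.
by apply: P_comb => // i; exact: (he i).1.
Qed.


Lemma rc_m i j : rc (m i) j = delta i j.
Proof. by rewrite (co_m hmo) /delta; case: (i == j). Qed.

Lemma pos_exists P : Defs.inE sp P -> exists p e, lift_of P p e.
Proof.
move=> hP.
have : forall i, exists x, P x /\ forall j, rc x j = delta i j by move=> i; apply: lifts.
case/fin_all_exists => e He.
have [C hC] : exists C : 'I_3 -> 'I_3 -> R, forall i j, co (e i) j = Dual (delta i j) (C i j).
  by exists (fun i j => dc (e i) j) => i j; rewrite [LHS]dual_split (He i).2.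
case: (hP) => _ hiso _.
have iso : forall i j, C i j + C j i = 0.
  move=> i j; have := hiso _ _ (He i).1 (He j).1.
  rewrite (sp_co hsp hmb hmo) !hC /=.
  by ord3 i; ord3 j; rewrite /delta /= => h; lra.
exists (V3 (C i1 i2) (C i2 i0) (C i0 i1)), e => i; split; first exact: (He i).1.
move=> j; rewrite hC; congr Dual.
have := iso i0 i0; have := iso i1 i1; have := iso i2 i2.
have := iso i0 i1; have := iso i0 i2; have := iso i1 i2.
by ord3 i; ord3 j; rewrite /Cp /= => *; lra.
Qed.

Lemma pos_unique P p q e f : Defs.inE sp P -> lift_of P p e -> lift_of P q f -> p = q.
Proof.
move=> hP he hf.
have ef : forall i, e i = f i.
  move=> i; apply: (lift_eq hP hf (he i).1) => j; exact: (rc_lift i j he).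
have hc : forall i j, Cp p i j = Cp q i j.
  by move=> i j; have := (he i).2 j; rewrite ef (hf i).2 => -[].
have := hc i1 i2; have := hc i2 i0; have := hc i0 i1; rewrite /Cp /= => h2 h1 h0.
by apply: v3E.
Qed.

Lemma construct p : exists P e, Defs.inE sp P /\ lift_of P p e.
Proof.
pose f i := \sum_(j < 3) Dual (delta i j) (Cp p i j) *: m j.
have cf : forall i j, co (f i) j = Dual (delta i j) (Cp p i j).
  by move=> i j; rewrite /f (co_sum_m hsp hmo).
pose P x := exists r : 'I_3 -> R, x = \sum_(i < 3) rD (r i) *: f i.
have cc : forall (r : 'I_3 -> R) j, co (\sum_(i < 3) rD (r i) *: f i) j =
   Dual (r j) (r i0 * Cp p i0 j + r i1 * Cp p i1 j + r i2 * Cp p i2 j).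
  move=> r j; rewrite (co_comb m hsp) !cf; apply: dual_eq => /=; last by ring.
  by ord3 j; rewrite /delta /=; ring.
exists P, f; split; last first.
  move=> i; split => //; exists (delta i); apply: co_inj => j.
  rewrite cc cf; congr Dual; by ord3 i; rewrite /delta /=; ring.
split.
- exists f; split => //.
  move=> r h i; have := congr1 (fun x => co x i) h; rewrite cc (co0 m hsp) => -[] //.
- move=> x y [r ->] [s ->]; rewrite (sp_co hsp hmb hmo) !cc /= /Cp /=; ring.
- move=> x [r ->] /(epsM_rc hsp hmb hmo) h.
  have r0 : forall i, r i = 0 by move=> i; have := h i; rewrite cc.
  apply: co_inj => j; rewrite cc (co0 m hsp) !r0; apply: dual_eq => /=; ring.
Qed.

End Pts.

End C.

Module D.
Import A B C.

Section Diff.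
Variable R : realType.
Local Notation D := (dual R).
Local Notation M := (M R).
Local Notation V := (V R).
Local Notation piM := (@Defs.pi R).
Local Notation rD := (@Defs.rD R).
Variable sp : M -> M -> D.
Variable m : 'I_3 -> M.
Hypothesis hsp : scalar_product sp.
Hypothesis hmb : is_basis m.
Hypothesis hmo : forall i j, sp (m i) (m j) = if i == j then 1 else 0.
Local Notation co := (co sp m).
Local Notation rc x i := (dre (co x i)).
Local Notation dc x i := (ddu (co x i)).
Local Notation co_inj := (co_inj hsp hmb hmo).
Local Notation lift_of := (lift_of sp m).
Local Notation vcv := (vcv sp m).
Local Notation vc := (vc sp m).
Local Notation delta := (@delta R).
Ltac ord3 i := case: (ord3P i) => ->.

Lemma co_dsum (c : 'I_3 -> 'I_3 -> D) (x : 'I_3 -> M) l :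
  co (\sum_(j < 3) \sum_(k < 3) c j k *: x j) l =
  (c i0 i0 + c i0 i1 + c i0 i2) * co (x i0) l + (c i1 i0 + c i1 i1 + c i1 i2) * co (x i1) l
  + (c i2 i0 + c i2 i1 + c i2 i2) * co (x i2) l.
Proof.
under eq_bigr => j _ do rewrite -scaler_suml.
by rewrite (co_comb m hsp) !sum3.
Qed.

Lemma pi_lift P p e i : lift_of P p e -> piM (e i) = piM (m i).
Proof.
move=> he; apply/(pi_rc hsp hmb hmo) => j.
by rewrite (rc_lift i j he) (rc_m hmo).
Qed.

Lemma diff_crit A B p q e f v : Defs.inE sp A -> lift_of A p e -> Defs.inE sp B -> lift_of B q f ->
  (diffE m A B v <-> vcv v = vsub q p).
Proof.
move=> hA he hB hf; split.
- case=> d [hv [eA [eB [hl hr]]]].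
  have eAe : forall i, eA i = e i.
    move=> i; case: (hl i) => hAi _ hpi _; apply: (lift_eq hsp hmb hmo hA he hAi) => j.
    by rewrite (proj1 (pi_rc hsp hmb hmo _ _) hpi j) (rc_m hmo).
  have eBf : forall i, eB i = f i.
    move=> i; case: (hl i) => _ hBi _ hpi; apply: (lift_eq hsp hmb hmo hB hf hBi) => j.
    by rewrite (proj1 (pi_rc hsp hmb hmo _ _) hpi j) (rc_m hmo).
  have hd : vcv v = tov d by rewrite hv /vcv /tov !(vc_comb hsp hmb hmo).
  have H : forall i l, Cp q i l = Cp p i l +
     ((d i0 * dre (levi R i i0 i0) + d i1 * dre (levi R i i0 i1) + d i2 * dre (levi R i i0 i2)) * delta i0 l +
      (d i0 * dre (levi R i i1 i0) + d i1 * dre (levi R i i1 i1) + d i2 * dre (levi R i i1 i2)) * delta i1 l +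
      (d i0 * dre (levi R i i2 i0) + d i1 * dre (levi R i i2 i1) + d i2 * dre (levi R i i2 i2)) * delta i2 l).
    move=> i l; have := congr1 (fun x => ddu (co x l)) (hr i).
    rewrite /= (coD m hsp) (coZ m hsp) co_dsum !eAe eBf !(he _).2 (hf i).2 /=.
    move=> ->; ring.
  rewrite hd; have := H i1 i2; have := H i2 i0; have := H i0 i1.
  rewrite /Cp /levi /delta /= => h2 h1 h0; apply: v3E => /=; lra.
- move=> hv; exists (vc v); split; first exact: (vc_expand hsp hmb hmo).
  exists e, f; split.
    by move=> i; split; [exact: (he i).1 | exact: (hf i).1 | exact: pi_lift he | exact: pi_lift hf].
  move=> i; apply: co_inj => l.
  rewrite (coD m hsp) (coZ m hsp) co_dsum !(he _).2 (hf i).2.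
  move: hv; rewrite /vcv /tov /vsub => -[h0 h1 h2].
  apply: dual_eq => /=; first by ring.
  by ord3 i; ord3 l; rewrite /Cp /levi /delta /= ?h0 ?h1 ?h2; ring.
Qed.

End Diff.

End D.

Module E.
Import A B C D.

Section Lines.
Variable R : realType.
Local Notation D := (dual R).
Local Notation M := (M R).
Local Notation V := (V R).
Local Notation piM := (@Defs.pi R).
Local Notation rD := (@Defs.rD R).
Variable sp : M -> M -> D.
Variable m : 'I_3 -> M.
Hypothesis hsp : scalar_product sp.
Hypothesis hmb : is_basis m.
Hypothesis hmo : forall i j, sp (m i) (m j) = if i == j then 1 else 0.
Local Notation co := (co sp m).
Local Notation rc x i := (dre (co x i)).
Local Notation dc x i := (ddu (co x i)).
Local Notation co_inj := (co_inj hsp hmb hmo).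
Local Notation lift_of := (lift_of sp m).
Local Notation vcv := (vcv sp m).
Local Notation vc := (vc sp m).
Local Notation delta := (@delta R).
Local Notation inEs := (@Defs.inE R sp).
Ltac ord3 i := case: (ord3P i) => ->.

Definition pos (P : M -> Prop) : v3 R :=
  epsilon (inhabits (vzero R)) (fun p => exists e, lift_of P p e).
Lemma pos_spec P : inEs P -> exists e, lift_of P (pos P) e.
Proof.
move=> hP; rewrite /pos.
exact: (epsilon_spec (inhabits (vzero R)) (fun p => exists e, lift_of P p e)
   (pos_exists hsp hmb hmo hP)).
Qed.
Lemma pos_eq P p e : inEs P -> lift_of P p e -> pos P = p.
Proof.
move=> hP he; have [f hf] := pos_spec hP.
exact: (pos_unique hsp hmb hmo hP hf he).
Qed.
Lemma pos_construct p : exists P, inEs P /\ pos P = p.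
Proof.
have [P [e [hP he]]] := construct hsp hmb hmo p.
by exists P; split => //; apply: pos_eq he.
Qed.

Lemma diffE_pos A B v : inEs A -> inEs B ->
  (diffE m A B v <-> vcv v = vsub (pos B) (pos A)).
Proof.
move=> hA hB; have [e he] := pos_spec hA; have [f hf] := pos_spec hB.
exact: (diff_crit hsp hmb hmo v hA he hB hf).
Qed.

Definition Lpos (L : (M -> Prop) -> Prop) (w p0 : v3 R) :=
  forall B, L B <-> (inEs B /\ exists t, pos B = vadd p0 (vsc t w)).

Lemma line_iff L v : line_dir sp m L v <-> (vcv v <> vzero R /\ exists p0, Lpos L (vcv v) p0).
Proof.
split.
- case=> hv [A [hA [LA hL]]]; split; first exact/(vcv_neq0 hsp hmb hmo).
  exists (pos A) => B; rewrite hL; split.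
    case=> hB [t]; rewrite (diffE_pos _ hA hB) (vcvZ m hsp) => h.
    by split => //; exists t; apply/vsub_eq; rewrite h.
  case=> hB [t ht]; split => //; exists t.
  by rewrite (diffE_pos _ hA hB) (vcvZ m hsp); apply/esym/vsub_eq.
- case=> hv [p0 hL]; split; first exact/(vcv_neq0 hsp hmb hmo).
  have [A [hA eA]] := pos_construct p0.
  exists A; split => //; split.
    apply/hL; split => //; exists 0; rewrite eA; case: (p0) => *.
    by apply: v3E => /=; ring.
  move=> B; rewrite hL; split.
    case=> hB [t ht]; split => //; exists t.
    by rewrite (diffE_pos _ hA hB) (vcvZ m hsp) eA; apply/esym/vsub_eq.
  case=> hB [t]; rewrite (diffE_pos _ hA hB) (vcvZ m hsp) eA => h.
  by split => //; exists t; apply/vsub_eq; rewrite h.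
Qed.

Lemma Lpos_pt L w p0 t : Lpos L w p0 -> exists B, L B /\ pos B = vadd p0 (vsc t w).
Proof.
move=> hL; have [B [hB eB]] := pos_construct (vadd p0 (vsc t w)).
by exists B; split => //; apply/hL; split => //; exists t.
Qed.

Lemma Lpos_two L w p0 B B' : Lpos L w p0 -> L B -> L B' ->
  exists t, pos B' = vadd (pos B) (vsc t w).
Proof.
move=> hL /hL [_ [t1 e1]] /hL [_ [t2 e2]]; exists (t2 - t1).
rewrite e1 e2; clear; case: p0 w => [? ? ?] [? ? ?]; apply: v3E => /=; ring.
Qed.

Lemma Lpos_par L w p0 w' p0' : Lpos L w p0 -> Lpos L w' p0' -> w' <> vzero R ->
  exists c, c != 0 /\ w' = vsc c w.
Proof.
move=> hL hL' hw'.
have [A [LA eA]] := Lpos_pt 0 hL'.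
have [B [LB eB]] := Lpos_pt 1 hL'.
have [t et] := Lpos_two hL LA LB.
have ew : w' = vsc t w.
  move: et; rewrite eA eB; clear; case: p0' w' w => [? ? ?] [? ? ?] [? ? ?] /= [] *.
  apply: v3E => /=; lra.
exists t; split => //; apply/eqP => t0; apply: hw'; rewrite ew t0.
by clear; case: w => *; apply: v3E => /=; ring.
Qed.

End Lines.

End E.

Module F.
Import A B C D E.

Section Axes.
Variable R : realType.
Local Notation D := (dual R).
Local Notation M := (M R).
Local Notation V := (V R).
Local Notation rD := (@Defs.rD R).
Variable sp : M -> M -> D.
Variable m : 'I_3 -> M.
Hypothesis hsp : scalar_product sp.
Hypothesis hmb : is_basis m.
Hypothesis hmo : forall i j, sp (m i) (m j) = if i == j then 1 else 0.
Local Notation co := (co sp m).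
Local Notation rc x i := (dre (co x i)).
Local Notation dc x i := (ddu (co x i)).
Local Notation vcv := (vcv sp m).
Local Notation inEs := (@Defs.inE R sp).
Local Notation pos := (pos sp m).
Local Notation cross := A.cross.
Ltac ord3 i := case: (ord3P i) => ->.

Definition alp u := tov (fun j => rc u j).
Definition bet u := tov (fun j => dc u j).

Lemma spZl a x y : sp x (a *: y) = a * sp x y.
Proof. by rewrite (sp_sym hsp) (spZ hsp) (sp_sym hsp). Qed.

Lemma sp_self u : sp u u = Dual (dot (alp u) (alp u)) (2 * dot (alp u) (bet u)).
Proof. by rewrite (sp_co hsp hmb hmo); apply: dual_eq => /=; rewrite /dot /alp /bet /tov /=; ring. Qed.

Lemma unit_ab u : sp u u = 1 -> dot (alp u) (alp u) = 1 /\ dot (alp u) (bet u) = 0.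
Proof.
rewrite sp_self => h; have h1 := congr1 (@dre R) h; have h2 := congr1 (@ddu R) h.
simpl in h1, h2; split; lra.
Qed.

Lemma decomp z : ~ epsM z -> exists a b u, [/\ 0 < a, sp u u = 1 & z = Dual a b *: u].
Proof.
move=> hz.
have hN : alp z <> vzero R.
  move=> e; apply: hz; apply/(epsM_rc hsp hmb hmo) => i.
  by move: e; rewrite /alp /tov /vzero => -[h0 h1 h2]; ord3 i.
have N0 := dot_gt0 hN.
set N := dot (alp z) (alp z) in N0 *.
set a := Num.sqrt N.
have ha : 0 < a by rewrite sqrtr_gt0.
have ha0 : a != 0 by rewrite gt_eqF.
have haa : a * a = N by rewrite -expr2 sqr_sqrtr // ltW.
set S := dot (alp z) (bet z).
set b := S / a.
set lam := Dual a^-1 (- b / (a * a)).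
exists a, b, (lam *: z); split => //.
  rewrite (spZ hsp) spZl sp_self -/N -/S; apply: dual_eq => /=.
    by rewrite -haa; field.
  by rewrite /b -haa; field.
rewrite scalerA.
have -> : Dual a b * lam = 1 by apply: dual_eq => /=; field.
by rewrite scale1r.
Qed.

Lemma decomp_uniq a b u a' b' u' : 0 < a -> 0 < a' -> sp u u = 1 -> sp u' u' = 1 ->
  Dual a b *: u = Dual a' b' *: u' -> u = u'.
Proof.
move=> ha ha' hu hu' e.
have e2 : Dual a b * Dual a b = Dual a' b' * Dual a' b'.
  have := congr1 (fun x => sp x x) e.
  by rewrite /= (spZ hsp) spZl (spZ hsp) spZl hu hu' !mulr1.
have ea : a = a'.
  move/(congr1 (@dre R)): (e2) => /= h; nra.
subst a'.
have eb : b = b'.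
  move/(congr1 (@ddu R)): (e2) => /= h.
  have : a * (b - b') = 0 by lra.
  by move/eqP; rewrite mulf_eq0 gt_eqF //= subr_eq0 => /eqP.
subst b'.
have ha0 : a != 0 by rewrite gt_eqF.
have hinv : Dual a^-1 (- b / (a * a)) * Dual a b = 1 by apply: dual_eq => /=; field.
by rewrite -[u]scale1r -hinv -scalerA e scalerA hinv scale1r.
Qed.

Lemma axis_iff z a b u : 0 < a -> sp u u = 1 -> z = Dual a b *: u ->
  forall B, axis sp z B <-> inEs B /\ bet u = cross (pos B) (alp u).
Proof.
move=> ha hu ez B; split.
- case=> hB [a' [b' [u' [ha' hu' ez' hBu']]]].
  have eu : u' = u by apply: (decomp_uniq ha' ha hu' hu); exact: (etrans (esym ez') ez).
  split => //; have [e he] := pos_spec hsp hmb hmo hB.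
  by rewrite -eu; apply/(mem_crit hsp hmb hmo u' hB he).
- case=> hB hc; split => //; exists a, b, u; split => //.
  have [e he] := pos_spec hsp hmb hmo hB.
  exact/(mem_crit hsp hmb hmo u hB he).
Qed.

Lemma axis_line z a b u c v : 0 < a -> sp u u = 1 -> z = Dual a b *: u ->
  c != 0 -> vcv v = vsc c (alp u) -> line_dir sp m (axis sp z) v.
Proof.
move=> ha hu ez hc hv; have [n1 o1] := unit_ab hu.
apply/(line_iff hsp hmb hmo); split.
  by rewrite hv; apply: vsc_neq0 => //; exact: unit_neq0.
exists (cross (alp u) (bet u)) => B; rewrite (axis_iff ha hu ez) hv.
split; case=> hB h; split => //.
  exact/(axis_real (pos B) n1 o1 hc).
exact/(axis_real (pos B) n1 o1 hc).
Qed.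

Lemma axis_dir z a b u v : 0 < a -> sp u u = 1 -> z = Dual a b *: u ->
  line_dir sp m (axis sp z) v -> exists c, c != 0 /\ vcv v = vsc c (alp u).
Proof.
move=> ha hu ez /(line_iff hsp hmb hmo) [hw [p0 hL]].
have [n1 o1] := unit_ab hu.
have [B0 [L0 e0]] := Lpos_pt hsp hmb hmo 0 hL.
have [B1 [L1 e1]] := Lpos_pt hsp hmb hmo 1 hL.
move: L0 L1; rewrite !(axis_iff ha hu ez) e0 e1 => -[_ h0] [_ h1].
exact: (dir_lemma n1 h0 h1 hw).
Qed.

Definition detD (f g h : 'I_3 -> D) :=
  f i0 * (g i1 * h i2 - g i2 * h i1) + f i1 * (g i2 * h i0 - g i0 * h i2)
  + f i2 * (g i0 * h i1 - g i1 * h i0).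

Lemma co_cross x y l : co (Defs.cross sp m x y) l =
  \sum_(i < 3) \sum_(j < 3) co x i * co y j * levi R i j l.
Proof.
rewrite /Defs.cross (co_sum m hsp).
under eq_bigr => i _ do rewrite (co_sum m hsp).
apply: eq_bigr => i _; apply: eq_bigr => j _.
by rewrite (co_sum_m hsp hmo).
Qed.

Lemma triple x y w : sp (Defs.cross sp m x y) w = detD (co x) (co y) (co w).
Proof.
rewrite (sp_co hsp hmb hmo) !co_cross !sum3 /levi /detD /=; ring.
Qed.

End Axes.

End F.

Module G.
Import A B C D E F.

Section Main.
Variable R : realType.
Local Notation D := (dual R).
Local Notation M := (M R).
Variable sp : M -> M -> D.
Variable m : 'I_3 -> M.
Hypothesis hsp : scalar_product sp.
Hypothesis hmb : is_basis m.
Hypothesis hmo : forall i j, sp (m i) (m j) = if i == j then 1 else 0.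
Local Notation co := (co sp m).
Local Notation alp := (alp sp m).
Local Notation bet := (bet sp m).

Lemma detD_alp u1 u2 u3 : detD (co u1) (co u2) (co u3) =
  Dual (det (alp u1) (alp u2) (alp u3)) (Dd (alp u1) (alp u2) (alp u3) (bet u1) (bet u2) (bet u3)).
Proof. apply: dual_eq; rewrite /detD /= /Dd /det /dot /A.cross /F.alp /F.bet /tov /=; ring. Qed.

Lemma detD_scale c1 c2 c3 u1 u2 u3 :
  detD (co (c1 *: u1)) (co (c2 *: u2)) (co (c3 *: u3)) = c1 * (c2 * (c3 * detD (co u1) (co u2) (co u3))).
Proof. rewrite /detD !(coZ m hsp); ring. Qed.

Lemma dual_cancel a b (x : D) : a != 0 -> Dual a b * x = 0 -> x = 0.
Proof.
move=> ha h.
have hinv : Dual a^-1 (- b / (a * a)) * Dual a b = 1 by apply: dual_eq => /=; field.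
by rewrite -[x]mul1r -hinv -mulrA h mulr0.
Qed.

Lemma triple_iff z1 z2 z3 a1 b1 u1 a2 b2 u2 a3 b3 u3 :
  0 < a1 -> 0 < a2 -> 0 < a3 ->
  z1 = Dual a1 b1 *: u1 -> z2 = Dual a2 b2 *: u2 -> z3 = Dual a3 b3 *: u3 ->
  (sp (Defs.cross sp m z1 z2) z3 = 0 <->
   det (alp u1) (alp u2) (alp u3) = 0 /\ Dd (alp u1) (alp u2) (alp u3) (bet u1) (bet u2) (bet u3) = 0).
Proof.
move=> h1 h2 h3 e1 e2 e3.
rewrite (triple hsp hmb hmo) e1 e2 e3 detD_scale detD_alp; split.
  move=> h; have := dual_cancel (negbT (gt_eqF h1)) h => /(dual_cancel (negbT (gt_eqF h2))).
  move/(dual_cancel (negbT (gt_eqF h3))) => h0.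
  by split; [exact: (congr1 (@dre R) h0) | exact: (congr1 (@ddu R) h0)].
case=> -> ->; have -> : Dual 0 0 = 0 :> D by [].
by rewrite !mulr0.
Qed.

End Main.

End G.

Theorem proposition14 (R : realType) (sp : M R -> M R -> dual R)
    (b0 m : 'I_3 -> M R) (z1 z2 z3 : M R) :
  scalar_product sp -> is_basis b0 -> pos_orthonormal sp b0 m ->
  ~ epsM z1 -> ~ epsM z2 -> ~ epsM z3 ->
  (sp (cross sp m z1 z2) z3 = 0 <->
     parallel3 sp m (axis sp z1) (axis sp z2) (axis sp z3)
     \/ exists L, [/\ is_line sp m L,
                      meets_orthogonally sp m (axis sp z1) L,
                      meets_orthogonally sp m (axis sp z2) L
                    & meets_orthogonally sp m (axis sp z3) L]).
Proof.
move=> hsp _ [hmb _ hmo] nz1 nz2 nz3.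
have [a1 [b1 [u1 [ha1 hu1 ez1]]]] := F.decomp hsp hmb hmo nz1.
have [a2 [b2 [u2 [ha2 hu2 ez2]]]] := F.decomp hsp hmb hmo nz2.
have [a3 [b3 [u3 [ha3 hu3 ez3]]]] := F.decomp hsp hmb hmo nz3.
have ax1 := F.axis_iff hsp hmb hmo ha1 hu1 ez1.
have ax2 := F.axis_iff hsp hmb hmo ha2 hu2 ez2.
have ax3 := F.axis_iff hsp hmb hmo ha3 hu3 ez3.
have [n1 o1] := F.unit_ab hsp hmb hmo hu1.
have [n2 o2] := F.unit_ab hsp hmb hmo hu2.
have [n3 o3] := F.unit_ab hsp hmb hmo hu3.
rewrite (G.triple_iff hsp hmb hmo ha1 ha2 ha3 ez1 ez2 ez3).
set A1 := F.alp sp m u1 in ax1 n1 o1 *.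
set A2 := F.alp sp m u2 in ax2 n2 o2 *.
set A3 := F.alp sp m u3 in ax3 n3 o3 *.
set B1 := F.bet sp m u1 in ax1 n1 o1 *.
set B2 := F.bet sp m u2 in ax2 n2 o2 *.
set B3 := F.bet sp m u3 in ax3 n3 o3 *.
split.
- move=> [hd hD].
  case: (classic (A.cross A1 A2 = A.vzero R /\ A.cross A1 A3 = A.vzero R /\
                  A.cross A2 A3 = A.vzero R)) => hc.
  + left; case: hc => h12 [h13 _].
    have [c2 [c3 [hc2 hc3 e2 e3]]] := A.par_all n1 n2 n3 h12 h13.
    have hv := B.vcv_mkV hsp hmb hmo A1.
    exists (B.mkV m A1); split.
    * apply: (F.axis_line hsp hmb hmo ha1 hu1 ez1 (c := 1)); first exact: oner_neq0.
      by rewrite hv A.vsc1.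
    * by apply: (F.axis_line hsp hmb hmo ha2 hu2 ez2 hc2); rewrite hv.
    * by apply: (F.axis_line hsp hmb hmo ha3 hu3 ez3 hc3); rewrite hv.
  + right.
    have [q [n [hn [[d1 [t1 e1]] [d2 [t2 e2]] [d3 [t3 e3]]]]]] :=
      A.core_any n1 n2 n3 o1 o2 o3 hd hD hc.
    pose L := fun B => Defs.inE sp B /\ exists t, E.pos sp m B = A.vadd q (A.vsc t n).
    have hvn := B.vcv_mkV hsp hmb hmo n.
    have hLd : line_dir sp m L (B.mkV m n).
      by apply/(E.line_iff hsp hmb hmo); rewrite hvn; split => //; exists q.
    have meet : forall z a b u t, 0 < a -> sp u u = 1 -> z = Dual a b *: u ->
        A.dot (F.alp sp m u) n = 0 ->
        A.cross (A.vadd q (A.vsc t n)) (F.alp sp m u) = F.bet sp m u ->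
        meets_orthogonally sp m (axis sp z) L.
      move=> z a b u t ha hu ez hdn ht; split.
        have [P [hP eP]] := E.pos_construct hsp hmb hmo (A.vadd q (A.vsc t n)).
        exists P; split; last by split => //; exists t.
        by apply/(F.axis_iff hsp hmb hmo ha hu ez); split => //; rewrite eP ht.
      exists (B.mkV m (F.alp sp m u)), (B.mkV m n); split => //.
        apply: (F.axis_line hsp hmb hmo ha hu ez (c := 1)); first exact: oner_neq0.
        by rewrite (B.vcv_mkV hsp hmb hmo) A.vsc1.
      by rewrite (B.vdot_vc hsp hmb hmo) !(B.vcv_mkV hsp hmb hmo).
    exists L; split.
    * by exists (B.mkV m n).
    * exact: (meet _ _ _ _ t1 ha1 hu1 ez1).
    * exact: (meet _ _ _ _ t2 ha2 hu2 ez2).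
    * exact: (meet _ _ _ _ t3 ha3 hu3 ez3).
- case.
  + case=> v [l1 l2 l3].
    have [c1 [hc1 e1]] := F.axis_dir hsp hmb hmo ha1 hu1 ez1 l1.
    have [c2 [hc2 e2]] := F.axis_dir hsp hmb hmo ha2 hu2 ez2 l2.
    have [c3 [hc3 e3]] := F.axis_dir hsp hmb hmo ha3 hu3 ez3 l3.
    have E1 : A1 = A.vsc c1^-1 (B.vcv sp m v) by rewrite e1 -A.vsc_inv.
    have E2 : A2 = A.vsc c2^-1 (B.vcv sp m v) by rewrite e2 -A.vsc_inv.
    have E3 : A3 = A.vsc c3^-1 (B.vcv sp m v) by rewrite e3 -A.vsc_inv.
    exact: (A.RL1 _ _ _ E1 E2 E3).
  + case=> L [_ [[P1 [aP1 LP1]] [v1 [w1 [ld1 lw1 hd1]]]]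
                 [[P2 [aP2 LP2]] [v2 [w2 [ld2 lw2 hd2]]]]
                 [[P3 [aP3 LP3]] [v3 [w3 [ld3 lw3 hd3]]]]].
    have [c1 [hc1 e1]] := F.axis_dir hsp hmb hmo ha1 hu1 ez1 ld1.
    have [c2 [hc2 e2]] := F.axis_dir hsp hmb hmo ha2 hu2 ez2 ld2.
    have [c3 [hc3 e3]] := F.axis_dir hsp hmb hmo ha3 hu3 ez3 ld3.
    have [hw1 [q1 hL1]] := proj1 (E.line_iff hsp hmb hmo L w1) lw1.
    have [hw2 [q2 hL2]] := proj1 (E.line_iff hsp hmb hmo L w2) lw2.
    have [hw3 [q3 hL3]] := proj1 (E.line_iff hsp hmb hmo L w3) lw3.
    have [k2 [hk2 ew2]] := E.Lpos_par hsp hmb hmo hL1 hL2 hw2.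
    have [k3 [hk3 ew3]] := E.Lpos_par hsp hmb hmo hL1 hL3 hw3.
    set n := B.vcv sp m w1 in hw1 hL1 ew2 ew3 hd1.
    rewrite (B.vdot_vc hsp hmb hmo) in hd1.
    rewrite (B.vdot_vc hsp hmb hmo) in hd2.
    rewrite (B.vdot_vc hsp hmb hmo) in hd3.
    rewrite e1 -/n A.dot_vscl in hd1.
    rewrite e2 ew2 A.dot_vscl A.dot_vscr in hd2.
    rewrite e3 ew3 A.dot_vscl A.dot_vscr in hd3.
    have d1 : A.dot n A1 = 0.
      by move/eqP: hd1; rewrite mulf_eq0 (negbTE hc1) /= A.dotC => /eqP.
    have d2 : A.dot n A2 = 0.
      by move/eqP: hd2; rewrite !mulf_eq0 (negbTE hc2) (negbTE hk2) /= A.dotC => /eqP.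
    have d3 : A.dot n A3 = 0.
      by move/eqP: hd3; rewrite !mulf_eq0 (negbTE hc3) (negbTE hk3) /= A.dotC => /eqP.
    have [s2 es2] := E.Lpos_two hL1 LP1 LP2.
    have [s3 es3] := E.Lpos_two hL1 LP1 LP3.
    have [_ f1] := proj1 (ax1 P1) aP1.
    have [_ f2] := proj1 (ax2 P2) aP2.
    have [_ f3] := proj1 (ax3 P3) aP3.
    apply: (A.RL2 (x := E.pos sp m P1) (t1 := 0) (t2 := s2) (t3 := s3) hw1 d1 d2 d3).
    * by rewrite A.vadd0.
    * by rewrite -es2.
    * by rewrite -es3.
Qed.
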